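(* Let $(G,\sigma)$ be a connection graph and $i,j\in V$ distinct fixed vertices. Let $\mathcal{V}_{i\to j}:V\to\mathbb{R}^{d\times d}$ be the connection voltage function, i.e. the unique solution of $(\mathcal{L}\mathcal{V}_{i\to j})(x)=0_{d\times d}$ for $x\in V\setminus\{i,j\}$, $\mathcal{V}_{i\to j}(i)=I_{d\times d}$, $\mathcal{V}_{i\to j}(j)=0_{d\times d}$. Then for every $x\in V$, $$\mathcal{V}_{i\to j}(x)=\mathbb{P}^x[T^0_i<T^0_j]\cdot\Omega^0_{xi}(j).$$
   Context: A connection graph $(G,\sigma)$: finite connected weighted graph $G=(V,E,W)$ with $w_{ij}>0$ iff $\{i,j\}\in E$, $\deg(i)=\sum_j w_{ij}$, and $\sigma$ mapping oriented edges to $\mathsf{O}(d)$ with $\sigma_{ji}=\sigma_{ij}^{\mathrm T}$; $(\mathcal{L}f)(x)=\sum_{y\sim x}w_{xy}(f(x)-\sigma_{xy}f(y))$ for $f:V\to\mathbb{R}^{d\times d}$. $(X_t)$ is the simple random walk with transition probabilities $w_{xy}/\deg(x)$; $\mathbb{P}^x,\mathbb{E}^x$ denote probability/expectation given $X_0=x$; $T^0_k=\inf\{t\ge0:X_t=k\}$. The conditional mean path signature is $\Omega^0_{xi}(j)=\mathbb{E}^x\big[\prod_{\ell=1}^{T^0_i}\sigma_{X_{\ell-1}X_\ell}\mid T^0_i<T^0_j\big]$ (ordered product, empty product $=I_d$). *)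

(* Defs.v *)
From HB Require Import structures.
From mathcomp Require Import all_boot all_order all_algebra.
From mathcomp Require Import all_classical all_reals all_analysis.
Set Implicit Arguments. Unset Strict Implicit. Unset Printing Implicit Defensive.
Import Order.TTheory GRing.Theory Num.Theory.
Import numFieldNormedType.Exports.
Local Open Scope ring_scope.

Section ConnectionGraph.
Variables (R : realType) (T : finType) (d : nat).
Variable w : T -> T -> R.                 (* edge weights, w x y > 0 iff xy edge *)
Variable sigma : T -> T -> 'M[R]_d.

Definition deg (x : T) : R := \sum_(y : T) w x y.

Definition is_connection_graph : Prop :=
  (forall x y, 0 <= w x y) /\
  (forall x y, w x y = w y x) /\
  (forall x, w x x = 0) /\
  (forall x y, connect [rel a b | 0 < w a b] x y) /\
  (forall x y, 0 < w x y -> sigma y x = (sigma x y)^T) /\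
  (forall x y, 0 < w x y -> (sigma x y)^T *m sigma x y = 1%:M).

Definition conn_laplacian (f : T -> 'M[R]_d) (x : T) : 'M[R]_d :=
  \sum_(y : T) w x y *: (f x - sigma x y *m f y).

Definition trans (x y : T) : R := w x y / deg x.

(* A finite trajectory started at x is x :: s (s = (X_1,...,X_n)).
   Its consecutive steps (X_{l-1}, X_l), l = 1..n: *)
Definition steps (x : T) (s : seq T) : seq (T * T) := zip (belast x s) s.

(* P^x[X_1 = s_1, ..., X_n = s_n] *)
Definition path_prob (x : T) (s : seq T) : R :=
  \prod_(e <- steps x s) trans e.1 e.2.

Definition path_sigma (x : T) (s : seq T) : 'M[R]_d :=
  foldr (fun e M => sigma e.1 e.2 *m M) 1%:M (steps x s).

(* the trajectory x :: s realises {T^0_i = size s < T^0_j}: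
   it ends at i and visits neither i nor j at times 0 .. size s - 1 *)
Definition first_hit (i j x : T) (s : seq T) : bool :=
  (last x s == i) && all (fun y => (y != i) && (y != j)) (belast x s).

(* P^x[T^0_i = n < T^0_j] *)
Definition hit_prob_n (i j x : T) (n : nat) : R :=
  \sum_(s : n.-tuple T | first_hit i j x s) path_prob x s.

(* P^x[T^0_i < T^0_j] = sum_n P^x[T^0_i = n < T^0_j] *)
Definition hit_prob (i j x : T) : R := limn (series (hit_prob_n i j x)).

(* E^x[ prod sigma ; T^0_i = n < T^0_j ] *)
Definition hit_sigma_n (i j x : T) (n : nat) : 'M[R]_d :=
  \sum_(s : n.-tuple T | first_hit i j x s) path_prob x s *: path_sigma x s.

(* E^x[ prod_{l=1}^{T^0_i} sigma ; T^0_i < T^0_j ], entrywise series *)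
Definition hit_sigma (i j x : T) : 'M[R]_d :=
  \matrix_(a < d, b < d) limn (series (fun n => hit_sigma_n i j x n a b)).

(* conditional mean path signature Omega^0_{xi}(j) = E[Y 1_A] / P[A]
   (MathComp convention: division by 0 gives 0) *)
Definition Omega0 (x i j : T) : 'M[R]_d := (hit_prob i j x)^-1 *: hit_sigma i j x.

End ConnectionGraph.

(* Main.v *)
Require Import Defs.
From HB Require Import structures.
From mathcomp Require Import all_boot all_order all_algebra.
From mathcomp Require Import all_classical all_reals all_analysis.
From mathcomp Require Import ring lra.
Import Order.TTheory GRing.Theory Num.Theory.
Import numFieldNormedType.Exports.
Local Open Scope ring_scope.
Set Implicit Arguments. Unset Strict Implicit. Unset Printing Implicit Defensive.

Section Main.
Variables (R : realType) (T : finType) (d : nat).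
Variables (w : T -> T -> R) (sigma : T -> T -> 'M[R]_d).
Hypothesis HG : is_connection_graph w sigma.
Variables (i j : T).
Hypothesis hij : i != j.

Definition bnd (x : T) : bool := (x == i) || (x == j).
Definition Am (f : T -> 'M[R]_d) (x : T) : 'M[R]_d :=
  if bnd x then 0 else \sum_y trans w x y *: (sigma x y *m f y).
Definition As (f : T -> R) (x : T) : R :=
  if bnd x then 0 else \sum_y trans w x y * f y.

Lemma w_ge0 x y : 0 <= w x y.
Proof. by case: HG. Qed.

Lemma deg_gt0 x : 0 < deg w x.
Proof.
have [z xz] : exists z, x != z.
  by case: (eqVneq x i) => [->|]; [exists j|exists i].
have := (proj1 (proj2 (proj2 (proj2 HG)))) x z.
case/connectP => p.
case: p => [/= _ exz|y p /= /andP[/= wxy _] _]; first by rewrite exz eqxx in xz.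
rewrite /deg (bigD1 y) //= ltr_pwDl //.
by apply: sumr_ge0 => u _; apply: w_ge0.
Qed.

Lemma trans_ge0 x y : 0 <= trans w x y.
Proof. by rewrite /trans divr_ge0 ?w_ge0 // ltW // deg_gt0. Qed.

Lemma sum_trans x : \sum_y trans w x y = 1.
Proof.
by rewrite /trans -mulr_suml divff // gt_eqF // deg_gt0.
Qed.

Lemma trans_gt0 x y : 0 < w x y -> 0 < trans w x y.
Proof. by move=> h; rewrite /trans divr_gt0 // deg_gt0. Qed.

Lemma trans_eq0 x y : ~~ (0 < w x y) -> trans w x y = 0.
Proof.
move=> h; have : w x y = 0.
  by apply/eqP; rewrite eq_le w_ge0 andbT leNgt.
by rewrite /trans => ->; rewrite mul0r.
Qed.

Lemma sigma_orth x y : 0 < w x y -> (sigma x y)^T *m sigma x y = 1%:M.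
Proof. by case: HG => _ [_ [_ [_ [_ h]]]]; apply: h. Qed.

Lemma Am_add f g : Am (fun y => f y + g y) = fun x => Am f x + Am g x.
Proof.
apply: funext => x; rewrite /Am; case: bnd; first by rewrite addr0.
by rewrite -big_split /=; apply: eq_bigr => y _; rewrite mulmxDr scalerDr.
Qed.

Lemma iterAm_add n f g :
  iter n Am (fun y => f y + g y) = fun x => iter n Am f x + iter n Am g x.
Proof.
elim: n => [//|n IH]; rewrite !iterS IH; exact: Am_add.
Qed.

Lemma As_add f g : As (fun y => f y + g y) = fun x => As f x + As g x.
Proof.
apply: funext => x; rewrite /As; case: bnd; first by rewrite addr0.
by rewrite -big_split /=; apply: eq_bigr => y _; rewrite mulrDr.
Qed.

Lemma iterAs_add n f g :
  iter n As (fun y => f y + g y) = fun x => iter n As f x + iter n As g x.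
Proof.
elim: n => [//|n IH]; rewrite !iterS IH; exact: As_add.
Qed.

Lemma As_scale c f : As (fun y => c * f y) = fun x => c * As f x.
Proof.
apply: funext => x; rewrite /As; case: bnd; first by rewrite mulr0.
by rewrite mulr_sumr; apply: eq_bigr => y _; rewrite mulrCA.
Qed.

Lemma iterAs_scale n c f :
  iter n As (fun y => c * f y) = fun x => c * iter n As f x.
Proof.
elim: n => [//|n IH]; rewrite !iterS IH; exact: As_scale.
Qed.

Lemma As_le f g : (forall y, f y <= g y) -> forall x, As f x <= As g x.
Proof.
move=> h x; rewrite /As; case: bnd => //.
by apply: ler_sum => y _; apply: ler_wpM2l; [apply: trans_ge0|apply: h].
Qed.

Lemma iterAs_le n f g : (forall y, f y <= g y) -> forall x, iter n As f x <= iter n As g x.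
Proof.
move=> h; elim: n => [//|n IH] x; rewrite !iterS; exact: As_le.
Qed.

Lemma As_ge0 f : (forall y, 0 <= f y) -> forall x, 0 <= As f x.
Proof.
move=> h x; rewrite /As; case: bnd => //.
by apply: sumr_ge0 => y _; apply: mulr_ge0; [apply: trans_ge0|apply: h].
Qed.

Lemma iterAs_ge0 n f : (forall y, 0 <= f y) -> forall x, 0 <= iter n As f x.
Proof.
move=> h; elim: n => [//|n IH] x; rewrite !iterS; exact: As_ge0.
Qed.

Lemma big_tuple_cons (V : nmodType) n (F : n.+1.-tuple T -> V) :
  \sum_(t : n.+1.-tuple T) F t =
  \sum_(y : T) \sum_(t : n.-tuple T) F [tuple of y :: t].
Proof.
rewrite pair_big /=.
rewrite (reindex (fun p : T * n.-tuple T => [tuple of p.1 :: p.2])) //=.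
apply: onW_bij.
exists (fun t : n.+1.-tuple T => (thead t, [tuple of behead t])).
- by case=> y t /=; congr pair; apply: val_inj.
- by move=> t /=; apply: val_inj => /=; case: t => [[|y s]].
Qed.

Lemma big_tuple0 (V : nmodType) (F : 0.-tuple T -> V) :
  \sum_(t : 0.-tuple T) F t = F [tuple].
Proof. by rewrite (big_pred1 [tuple]) // => t /=; symmetry; apply/eqP; exact: tuple0. Qed.

Lemma path_prob_cons x y s : path_prob w x (y :: s) = trans w x y * path_prob w y s.
Proof. by rewrite /path_prob /steps /= big_cons. Qed.

Lemma path_sigma_cons x y s :
  path_sigma sigma x (y :: s) = sigma x y *m path_sigma sigma y s.
Proof. by []. Qed.

Lemma first_hit_cons x y s : first_hit i j x (y :: s) = ~~ bnd x && first_hit i j y s.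
Proof. by rewrite /first_hit /bnd /= negb_or andbCA. Qed.

Definition U0 (y : T) : 'M[R]_d := if y == i then 1%:M else 0.
Definition P0 (y : T) : R := if y == i then 1 else 0.

Lemma hsn_rec x n :
  hit_sigma_n w sigma i j x n.+1 = Am (fun y => hit_sigma_n w sigma i j y n) x.
Proof.
rewrite /hit_sigma_n big_mkcond big_tuple_cons /Am.
case: (boolP (bnd x)) => hb.
  by apply: big1 => y _; apply: big1 => t _; rewrite /= first_hit_cons hb.
apply: eq_bigr => y _.
rewrite [in RHS]big_mkcond mulmx_sumr scaler_sumr; apply: eq_bigr => t _ /=.
rewrite first_hit_cons hb /=; case: first_hit; last by rewrite mulmx0 scaler0.
by rewrite path_prob_cons path_sigma_cons !scalemxAr scalerA.
Qed.

Lemma hpn_rec x n :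
  hit_prob_n w i j x n.+1 = As (fun y => hit_prob_n w i j y n) x.
Proof.
rewrite /hit_prob_n big_mkcond big_tuple_cons /As.
case: (boolP (bnd x)) => hb.
  by apply: big1 => y _; apply: big1 => t _; rewrite /= first_hit_cons hb.
apply: eq_bigr => y _.
rewrite [in RHS]big_mkcond mulr_sumr; apply: eq_bigr => t _ /=.
rewrite first_hit_cons hb /=; case: first_hit; last by rewrite mulr0.
by rewrite path_prob_cons.
Qed.

Lemma hsn_iter n : (fun x => hit_sigma_n w sigma i j x n) = iter n Am U0.
Proof.
elim: n => [|n IH]; apply: funext => x.
  rewrite /hit_sigma_n big_mkcond big_tuple0 /= /first_hit /= andbT /U0.
  by case: (x == i) => //; rewrite /path_prob /steps /= big_nil scale1r.
by rewrite hsn_rec IH.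
Qed.

Lemma hpn_iter n : (fun x => hit_prob_n w i j x n) = iter n As P0.
Proof.
elim: n => [|n IH]; apply: funext => x.
  rewrite /hit_prob_n big_mkcond big_tuple0 /= /first_hit /= andbT /P0.
  by case: (x == i) => //; rewrite /path_prob /steps /= big_nil.
by rewrite hpn_rec IH.
Qed.

Variable V : T -> 'M[R]_d.
Hypothesis HV : forall x, x != i -> x != j -> conn_laplacian w sigma V x = 0.
Hypothesis HVi : V i = 1%:M.
Hypothesis HVj : V j = 0.

Lemma V_fix : V = fun x => U0 x + Am V x.
Proof.
apply: funext => x; rewrite /U0 /Am /bnd.
case: (eqVneq x i) => [->|xi]; first by rewrite /= HVi addr0.
case: (eqVneq x j) => [->|xj]; first by rewrite /= HVj addr0.
rewrite /= add0r.
have h := HV xi xj; rewrite /conn_laplacian in h.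
have hs : \sum_y w x y *: (sigma x y *m V y) = deg w x *: V x.
  move: h; rewrite (eq_bigr (fun y => w x y *: V x - w x y *: (sigma x y *m V y))); last first.
    by move=> y _; rewrite scalerBr.
  rewrite sumrB -scaler_suml -/(deg w x) => /eqP; rewrite subr_eq0 => /eqP ->.
  by [].
rewrite /trans.
under eq_bigr => y _ do rewrite mulrC -scalerA.
rewrite -scaler_sumr hs scalerA mulVf ?scale1r //.
by rewrite gt_eqF // deg_gt0.
Qed.

Lemma V_decomp n : V = fun x => \sum_(k < n) iter k Am U0 x + iter n Am V x.
Proof.
elim: n => [|n IH]; first by apply: funext => x; rewrite big_ord0 add0r.
rewrite {1}IH; apply: funext => x.
rewrite {1}V_fix iterAm_add big_ord_recr /= -addrA; congr (_ + _).
by rewrite -iterSr.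
Qed.

Definition Nm (F : 'M[R]_d) : R := \sum_a \sum_b F a b ^+ 2.

Lemma Nm_ge0 (F : 'M[R]_d) : 0 <= Nm F.
Proof. by apply: sumr_ge0 => a _; apply: sumr_ge0 => b _; apply: sqr_ge0. Qed.

Lemma Nm0 : Nm 0 = 0.
Proof. by apply: big1 => a _; apply: big1 => b _; rewrite mxE expr0n. Qed.

Lemma entry_le_Nm (F : 'M[R]_d) a b : F a b ^+ 2 <= Nm F.
Proof.
rewrite /Nm (bigD1 a) //= (bigD1 b) //= -addrA lerDl.
apply: addr_ge0; first by apply: sumr_ge0 => c _; apply: sqr_ge0.
by apply: sumr_ge0 => c _; apply: sumr_ge0 => e _; apply: sqr_ge0.
Qed.

Lemma NmE (F : 'M[R]_d) : Nm F = \tr (F^T *m F).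
Proof.
rewrite /Nm /mxtrace exchange_big /=; apply: eq_bigr => b _.
by rewrite mxE; apply: eq_bigr => a _; rewrite mxE expr2.
Qed.

Lemma Nm_orth (S F : 'M[R]_d) : S^T *m S = 1%:M -> Nm (S *m F) = Nm F.
Proof.
move=> h; rewrite !NmE trmx_mul -mulmxA (mulmxA S^T) h mul1mx //.
Qed.

Lemma jensen (p g : T -> R) : (forall y, 0 <= p y) -> \sum_y p y = 1 ->
  (\sum_y p y * g y) ^+ 2 <= \sum_y p y * g y ^+ 2.
Proof.
move=> p0 p1; set B := \sum_y p y * g y.
have e : \sum_y p y * (g y - B) ^+ 2 = \sum_y p y * g y ^+ 2 - B ^+ 2.
  rewrite (eq_bigr (fun y => p y * g y ^+ 2 - (B *+ 2 * (p y * g y) - B ^+ 2 * p y))); last first.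
    by move=> y _; ring.
  rewrite sumrB sumrB -!mulr_sumr p1 -/B; ring.
rewrite -subr_ge0 -e; apply: sumr_ge0 => y _; apply: mulr_ge0 => //; apply: sqr_ge0.
Qed.

Lemma Nm_Am f x : Nm (Am f x) <= As (fun y => Nm (f y)) x.
Proof.
rewrite /Am /As; case: bnd; first by rewrite Nm0.
have -> : \sum_y trans w x y * Nm (f y) = \sum_y trans w x y * Nm (sigma x y *m f y).
  apply: eq_bigr => y _; case: (boolP (0 < w x y)) => h.
    by rewrite Nm_orth // sigma_orth.
  by rewrite trans_eq0 // !mul0r.
apply: (@le_trans _ _ (\sum_a \sum_b \sum_y trans w x y * (sigma x y *m f y) a b ^+ 2)).
  apply: ler_sum => a _; apply: ler_sum => b _; rewrite summxE.
  under eq_bigr do rewrite mxE.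
  by apply: jensen; [apply: trans_ge0|apply: sum_trans].
rewrite [X in _ <= X](eq_bigr (fun y => \sum_a \sum_b trans w x y * (sigma x y *m f y) a b ^+ 2)); last first.
  by move=> y _; rewrite /Nm mulr_sumr; apply: eq_bigr => a _; rewrite mulr_sumr.
rewrite [X in _ <= X]exchange_big /=; apply: ler_sum => a _.
by rewrite [X in _ <= X]exchange_big.
Qed.

Lemma Nm_iterAm n f x : Nm (iter n Am f x) <= iter n As (fun y => Nm (f y)) x.
Proof.
elim: n x => [//|n IH] x; rewrite !iterS.
apply: le_trans (Nm_Am _ x) _; exact: As_le.
Qed.

Definition one (_ : T) : R := 1.
Definition G n x := iter n As one x.

Lemma G_ge0 n x : 0 <= G n x.
Proof. by apply: iterAs_ge0 => y; rewrite /one. Qed.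

Lemma As_one x : As one x <= 1.
Proof.
rewrite /As; case: bnd => //.
by under eq_bigr do rewrite /one mulr1; rewrite sum_trans.
Qed.

Lemma G_succ n x : G n.+1 x <= G n x.
Proof.
elim: n x => [|n IH] x; first exact: As_one.
change (As (G n.+1) x <= As (G n) x); exact: As_le.
Qed.

Lemma G_anti n m x : (n <= m)%N -> G m x <= G n x.
Proof.
move/subnK <-; elim: (m - n)%N => [|k IH] //.
by apply: le_trans IH; rewrite addSn; apply: G_succ.
Qed.

Lemma G_le1 n x : G n x <= 1.
Proof. by have := G_anti x (leq0n n). Qed.

Lemma G_bnd x : bnd x -> G 1 x = 0.
Proof. by rewrite /G /= /As => ->. Qed.

Lemma G_lt1_ex y : exists n, G n y < 1.
Proof.
have := (proj1 (proj2 (proj2 (proj2 HG)))) y i.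
case/connectP => p; elim: p y => [|z p IH] y /=.
  by move=> _ <-; exists 1%N; rewrite G_bnd // /bnd eqxx.
case/andP => wyz pp el.
have [n hn] := IH z pp el.
case: (boolP (bnd y)) => hb; first by exists 1%N; rewrite G_bnd.
exists n.+1; rewrite /G iterS /As (negbTE hb) -/(G n).
have e : \sum_u trans w y u * G n u = 1 - \sum_u trans w y u * (1 - G n u).
  rewrite -{1}(sum_trans y) -sumrB; apply: eq_bigr => u _; ring.
rewrite e ltrBlDr ltrDl (bigD1 z) //=.
apply: ltr_pwDl.
  by apply: mulr_gt0; [apply: trans_gt0|rewrite subr_gt0].
apply: sumr_ge0 => u _; apply: mulr_ge0; first exact: trans_ge0.
by rewrite subr_ge0 G_le1.
Qed.

Lemma G_unif : exists N q, [/\ (0 < N)%N, 0 <= q, q < 1 & forall y, G N y <= q].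
Proof.
suff [N [q [N0 q0 q1 h]]] : exists N q, [/\ (0 < N)%N, 0 <= q, q < 1 &
     forall y, y \in enum T -> G N y <= q].
  by exists N, q; split => // y; apply: h; rewrite mem_enum.
elim: (enum T) => [|y s [N [q [N0 q0 q1 h]]]].
  by exists 1%N, 0; split.
have [n hn] := G_lt1_ex y.
exists (maxn N n), (Num.max q (G n y)); split.
- by rewrite leq_max N0.
- by rewrite le_max q0.
- by rewrite gt_max q1 hn.
move=> u; rewrite inE => /orP[/eqP ->|us].
  by apply: le_trans (G_anti _ (leq_maxr N n)) _; rewrite le_max lexx orbT.
apply: le_trans (G_anti _ (leq_maxl N n)) _.
by apply: le_trans (h u us) _; rewrite le_max lexx.
Qed.

Lemma G_mul n N q : (forall y, G N y <= q) -> forall x, G (n + N) x <= q * G n x.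
Proof.
move=> h x; rewrite /G iterD.
have -> : q * iter n As one x = iter n As (fun y => q * one y) x by rewrite iterAs_scale.
by apply: iterAs_le => y; rewrite /one mulr1; apply: h.
Qed.

Lemma G_cvg x : ((fun n => G n x) @ \oo --> (0 : R))%classic.
Proof.
have [N [q [N0 q0 q1 h]]] := G_unif.
have hk k : G (k * N) x <= q ^+ k.
  elim: k => [|k IH]; first by rewrite mul0n expr0 G_le1.
  rewrite mulSn addnC exprS.
  by apply: le_trans (G_mul (k * N) h x) _; apply: ler_wpM2l.
apply/cvgr0Pnorm_lt => e e0.
have hq : `|q| < 1 by rewrite ger0_norm.
have := (cvgr0Pnorm_lt _).1 (cvg_expr hq) e e0.
case=> K _ HK.
exists (K * N)%N => // n /= hn.
rewrite ger0_norm ?G_ge0 //.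
apply: le_lt_trans (G_anti x hn) _.
apply: le_lt_trans (hk K) _.
apply: le_lt_trans (ler_norm _) _.
by apply: HK => /=.
Qed.

Lemma hsn_eq x k : hit_sigma_n w sigma i j x k = iter k Am U0 x.
Proof. by have := congr1 (fun f => f x) (hsn_iter k). Qed.

Lemma hpn_eq x k : hit_prob_n w i j x k = iter k As P0 x.
Proof. by have := congr1 (fun f => f x) (hpn_iter k). Qed.

Lemma zcvg x a b : ((fun n => iter n Am V x a b) @ \oo --> (0 : R))%classic.
Proof.
apply/cvgr0Pnorm_lt => e e0.
set c := \sum_y Nm (V y).
have c0 : 0 <= c by apply: sumr_ge0 => y _; apply: Nm_ge0.
have ec : 0 < e ^+ 2 / (c + 1).
  by apply: divr_gt0; [apply: exprn_gt0 | apply: ltr_wpDl].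
have := (cvgr0Pnorm_lt _).1 (G_cvg x) _ ec.
case=> K _ HK; exists K => // n /= /HK /= hn.
have h1 : (iter n Am V x a b) ^+ 2 <= c * G n x.
  apply: le_trans (entry_le_Nm _ a b) _; apply: le_trans (Nm_iterAm n V x) _.
  have -> : c * G n x = iter n As (fun y => c * one y) x by rewrite iterAs_scale.
  apply: iterAs_le => y; rewrite /one mulr1 /c (bigD1 y) //= lerDl.
  by apply: sumr_ge0 => u _; apply: Nm_ge0.
have g0 := G_ge0 n x.
move: hn; rewrite ger0_norm // ltr_pdivlMr; last by apply: ltr_wpDl.
move=> hn.
have h2 : (iter n Am V x a b) ^+ 2 < e ^+ 2 by nra.
rewrite ltr_norml; apply/andP; split; nra.
Qed.

Lemma series_sigma x a b :
  (series (fun n => hit_sigma_n w sigma i j x n a b) @ \oo --> V x a b)%classic.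
Proof.
have e n : series (fun k => hit_sigma_n w sigma i j x k a b) n
           = V x a b - iter n Am V x a b.
  have hv := congr1 (fun f : T -> 'M[R]_d => f x a b) (V_decomp n); simpl in hv.
  rewrite hv mxE summxE addrK /series /= big_mkord.
  by apply: eq_bigr => k _; rewrite hsn_eq.
apply/cvgrPdist_lt => eps eps0.
have := (cvgr0Pnorm_lt _).1 (zcvg x a b) _ eps0.
case=> K _ HK; exists K => // n /= /HK /= hn.
rewrite e.
have -> : V x a b - (V x a b - iter n Am V x a b) = iter n Am V x a b by ring.
exact: hn.
Qed.

Lemma hit_sigma_V x : hit_sigma w sigma i j x = V x.
Proof.
apply/matrixP => a b; rewrite mxE.
apply: cvg_lim => //.
exact: series_sigma.
Qed.

Definition B0 (y : T) : R := if bnd y then 1 else 0.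

Lemma one_fix : one = fun x => B0 x + As one x.
Proof.
apply: funext => x; rewrite /B0 /As; case: bnd; first by rewrite addr0.
by rewrite add0r; under eq_bigr do rewrite /one mulr1; rewrite sum_trans.
Qed.

Lemma one_decomp n : one = fun x => \sum_(k < n) iter k As B0 x + iter n As one x.
Proof.
elim: n => [|n IH]; first by apply: funext => x; rewrite big_ord0 add0r.
rewrite {1}IH; apply: funext => x.
rewrite {1}one_fix iterAs_add big_ord_recr /= -addrA; congr (_ + _).
by rewrite -iterSr.
Qed.

Lemma hpn_ge0 x k : 0 <= hit_prob_n w i j x k.
Proof.
by rewrite hpn_eq; apply: iterAs_ge0 => y; rewrite /P0; case: ifP.
Qed.

Lemma series_prob_le1 x n : series (hit_prob_n w i j x) n <= 1.
Proof.
have hv : (1:R) = \sum_(k < n) iter k As B0 x + iter n As one x :=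
  congr1 (fun f : T -> R => f x) (one_decomp n).
rewrite [X in _ <= X]hv /series /= big_mkord.
apply: (@le_trans _ _ (\sum_(k < n) iter k As B0 x)).
  apply: ler_sum => k _; rewrite hpn_eq; apply: iterAs_le => y.
  by rewrite /P0 /B0 /bnd; case: (y == i) => //=; case: (y == j).
by rewrite lerDl; apply: iterAs_ge0 => y; rewrite /one.
Qed.

Lemma series_prob_nd x : {homo series (hit_prob_n w i j x) : n m / (n <= m)%N >-> n <= m}.
Proof.
move=> n m nm; rewrite /series /= (big_cat_nat _ nm) //= lerDl.
by apply: sumr_ge0 => k _; apply: hpn_ge0.
Qed.

Lemma series_prob_cvg x : cvgn (series (hit_prob_n w i j x)).
Proof.
apply: nondecreasing_is_cvgn; first exact: series_prob_nd.
by exists 1 => _ [n _ <-]; apply: series_prob_le1.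
Qed.

Lemma hp0_V x : hit_prob w i j x = 0 -> V x = 0.
Proof.
move=> hp.
have pk k : hit_prob_n w i j x k = 0.
  apply/eqP; rewrite eq_le hpn_ge0 andbT.
  have := nondecreasing_cvgn_le (series_prob_nd x) (@series_prob_cvg x) k.+1.
  rewrite -/(hit_prob w i j x) hp /series /= big_nat_recr //= => h.
  apply: le_trans h; rewrite lerDr.
  by apply: sumr_ge0 => u _; apply: hpn_ge0.
have sk k a b : hit_sigma_n w sigma i j x k a b = 0.
  have : (hit_sigma_n w sigma i j x k a b) ^+ 2 <= 0.
    apply: le_trans (entry_le_Nm _ a b) _; rewrite hsn_eq.
    apply: le_trans (Nm_iterAm k U0 x) _.
    have -> : 0 = Nm 1%:M * iter k As P0 x by rewrite -hpn_eq pk mulr0.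
    have -> : Nm 1%:M * iter k As P0 x = iter k As (fun y => Nm 1%:M * P0 y) x.
      by rewrite iterAs_scale.
    apply: iterAs_le => y.
    by rewrite /U0 /P0; case: (y == i); rewrite ?mulr1 ?mulr0 ?Nm0.
  by move=> h; apply/eqP; rewrite -sqrf_eq0 eq_le h sqr_ge0.
apply/matrixP => a b; rewrite mxE.
rewrite -(cvg_lim _ (@series_sigma x a b)) //.
have -> : series (fun n => hit_sigma_n w sigma i j x n a b) = fun _ => 0.
  apply: funext => n; rewrite /series /=; apply: big1 => k _; exact: sk.
by rewrite lim_cst.
Qed.

End Main.

Theorem theorem5p8 (R : realType) (T : finType) (d : nat)
  (w : T -> T -> R) (sigma : T -> T -> 'M[R]_d)
  (HG : is_connection_graph w sigma)
  (i j : T) (hij : i != j)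
  (V : T -> 'M[R]_d)
  (HV : forall x, x != i -> x != j -> conn_laplacian w sigma V x = 0)
  (HVi : V i = 1%:M) (HVj : V j = 0) :
  forall x : T, V x = hit_prob w i j x *: Omega0 w sigma x i j.
Proof.
move=> x; rewrite /Omega0 scalerA.
case: (eqVneq (hit_prob w i j x) 0) => hp.
  by rewrite hp mul0r scale0r (hp0_V HG hij HV HVi HVj hp).
by rewrite mulfV // scale1r (hit_sigma_V HG hij HV HVi HVj).
Qed.
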